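(* Let $1\le p<\infty$ and let $(X,\mathcal B,\mu,f)$ be a dissipative system of bounded distortion generated by $W$. There exists $L\in\mathbb R$ such that for all $n,k\in\mathbb Z$ and all $\varphi\in L^p(X)$, \[ \frac1L\,\frac{\mu(f^k(W))}{\mu(f^{k+n}(W))}\int_{f^{k+n}(W)}|\varphi|^p\,d\mu\le\int_{f^k(W)}|\varphi|^p\circ f^n\,d\mu\le L\,\frac{\mu(f^k(W))}{\mu(f^{k+n}(W))}\int_{f^{k+n}(W)}|\varphi|^p\,d\mu. \]
   Context: $(X,\mathcal B,\mu)$ is $\sigma$-finite, $f:X\to X$ is bimeasurable invertible with Radon–Nikodym derivatives of $\mu\circ f$ and $\mu\circ f^{-1}$ w.r.t. $\mu$ bounded below. Dissipative generated by $W$: $W\in\mathcal B$, $0<\mu(W)<\infty$, $X=\dot\bigcup_{k\in\mathbb Z}f^k(W)$ (pairwise disjoint). Bounded distortion: there is $K>0$ with $\frac1K\frac{\mu(f^k(W))}{\mu(W)}\le\frac{\mu(f^k(B))}{\mu(B)}\le K\frac{\mu(f^k(W))}{\mu(W)}$ for all $k\in\mathbb Z$ and measurable $B\subseteq W$ with $\mu(B)>0$. *)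

(* Defs.v *)
From HB Require Import structures.
From mathcomp Require Import all_boot all_order all_algebra.
From mathcomp Require Import all_classical all_reals all_analysis.
Set Implicit Arguments. Unset Strict Implicit. Unset Printing Implicit Defensive.
Import Order.TTheory GRing.Theory Num.Theory.
Local Open Scope classical_set_scope.
Local Open Scope ring_scope.

Definition iterz (T : Type) (f finv : T -> T) (k : int) : T -> T :=
  match k with
  | Posz n => iter n f
  | Negz n => iter n.+1 finv
  end.

Definition bimeas_invertible (d : measure_display) (T : measurableType d)
  (f finv : T -> T) : Prop :=
  [/\ cancel f finv, cancel finv f,
      measurable_fun setT f & measurable_fun setT finv].

Definition RN_bounded_below (d : measure_display) (T : measurableType d)
  (R : realType) (mu : {measure set T -> \bar R}) (g : T -> T) : Prop :=
  exists (h : T -> R) (c : R), [/\ 0 < c, measurable_fun setT h,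
    (forall x, c <= h x) &
    forall A, measurable A -> mu (g @` A) = (\int[mu]_(x in A) (h x)%:E)%E].

Definition dissipative_gen (d : measure_display) (T : measurableType d)
  (R : realType) (mu : {measure set T -> \bar R}) (f finv : T -> T)
  (W : set T) : Prop :=
  [/\ measurable W, (0 < mu W)%E, (mu W < +oo)%E,
      [set: T] = \bigcup_(k in [set: int]) (iterz f finv k @` W) &
      forall i j : int, i != j ->
        (iterz f finv i @` W) `&` (iterz f finv j @` W) = set0].

Definition bounded_distortion (d : measure_display) (T : measurableType d)
  (R : realType) (mu : {measure set T -> \bar R}) (f finv : T -> T)
  (W : set T) : Prop :=
  exists K : R, 0 < K /\
    forall (k : int) (B : set T), measurable B -> B `<=` W -> (0 < mu B)%E ->
      ((K^-1)%:E * (mu (iterz f finv k @` W) / mu W)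
         <= mu (iterz f finv k @` B) / mu B)%E /\
      (mu (iterz f finv k @` B) / mu B
         <= K%:E * (mu (iterz f finv k @` W) / mu W))%E.

Definition in_Lp (d : measure_display) (T : measurableType d)
  (R : realType) (mu : {measure set T -> \bar R}) (p : R) (phi : T -> R) : Prop :=
  measurable_fun setT phi /\
  (\int[mu]_x (`|phi x| `^ p)%:E < +oo)%E.

(* Main.v *)
Require Import Defs.
From HB Require Import structures.
From mathcomp Require Import all_boot all_order all_algebra.
From mathcomp Require Import all_classical all_reals all_analysis.
From mathcomp Require Import zify ring lra measurable_realfun.
Import Order.TTheory GRing.Theory Num.Theory.
Local Open Scope classical_set_scope.
Local Open Scope ring_scope.

Section Iter.
Context {T : Type} {f finv : T -> T}.
Hypotheses (fK : cancel f finv) (finvK : cancel finv f).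
Local Notation F := (iterz f finv).

Lemma iterzS (z : int) x : F (z + 1) x = f (F z x).
Proof using fK finvK.
case: z => [n|[|n]].
- by have -> : (n%:Z + 1 = n.+1%:Z) by lia.
- have -> : ((-1)%Z + 1 = 0 :> int) by lia.
  by rewrite /= finvK.
- have -> : (Negz n.+1 + 1 = Negz n) by rewrite !NegzE; lia.
  by rewrite /= finvK.
Qed.

Lemma iterzP (z : int) x : F (z - 1) x = finv (F z x).
Proof using fK finvK.
case: z => [[|n]|n].
- by have -> : (0%:Z - 1 = Negz 0) by lia.
- have -> : (n.+1%:Z - 1 = n%:Z) by lia.
  by rewrite /= fK.
- by have -> : (Negz n - 1 = Negz n.+1) by rewrite !NegzE; lia.
Qed.

Lemma iterzD (a b : int) x : F (a + b) x = F a (F b x).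
Proof using fK finvK.
elim/int_rect: a x => [|n IH|n IH] x; first by rewrite add0r.
- have -> : (n.+1%:Z = n%:Z + 1) by lia.
  by rewrite addrAC !iterzS IH.
- have -> : (- n.+1%:Z = - n%:Z - 1) by lia.
  by rewrite addrAC !iterzP IH.
Qed.

Lemma iterzN (a : int) x : F (- a) (F a x) = x.
Proof using fK finvK. by rewrite -iterzD addNr. Qed.
Lemma iterzNK (a : int) x : F a (F (- a) x) = x.
Proof using fK finvK. by rewrite -iterzD addrN. Qed.
End Iter.
Lemma integral_cmp d (T : measurableType d) (R : realType)
  (m1 m2 : {measure set T -> \bar R}) (D : set T) (mD : measurable D)
  (C : R) (C0 : 0 <= C) :
  (forall A, measurable A -> A `<=` D -> (m1 A <= C%:E * m2 A)%E) ->
  forall g : T -> \bar R, (forall x, 0 <= g x)%E -> measurable_fun [set: T] g ->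
  (\int[m1]_(x in D) g x <= C%:E * \int[m2]_(x in D) g x)%E.
Proof.
move=> h g g0 mg.
pose m1' := mrestr m1 mD.
pose m2' := mscale (NngNum C0) (mrestr m2 mD).
rewrite (@eq_measure_integral _ _ _ _ m1'); last first.
  by move=> A mA AD; rewrite -[RHS]/(m1 (A `&` D)) setIidl.
rewrite (_ : C%:E * _ = \int[m2']_(x in D) g x)%E; last first.
  rewrite ge0_integral_mscale//; last exact: measurable_funS mg.
  congr (_ * _)%E; apply: eq_measure_integral => A mA AD.
  by rewrite -[RHS]/(m2 (A `&` D)) setIidl.
apply: ge0_le_measure_integral => // S mS.
rewrite /m1' /m2' /= /mscale /mrestr /=.
apply: h; [exact: measurableI | exact: subIsetr].
Qed.
Lemma RN_null d (T : measurableType d) (R : realType)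
  (mu : {measure set T -> \bar R}) (g : T -> T) :
  RN_bounded_below mu g -> forall A, measurable A -> mu A = 0 -> mu (g @` A) = 0.
Proof.
move=> [h [c [_ mh _ hA]]] A mA A0.
rewrite hA// null_set_integral//.
by apply/measurable_EFinP; exact: measurable_funS mh.
Qed.

Lemma real_ratio (R : realType) (x y m w a b K : R) :
  0 < m -> 0 < w -> 0 < a -> 0 < b -> 0 < K ->
  x / m <= K * (a / w) -> K^-1 * (b / w) <= y / m -> x <= K ^+ 2 * a / b * y.
Proof.
move=> m0 w0 a0 b0 K0 h1 h2.
rewrite ler_pdivrMr// in h1.
rewrite ler_pdivlMr// in h2.
apply: (le_trans h1).
have -> : K * (a / w) * m = K ^+ 2 * a / b * (K^-1 * (b / w) * m).
  by field; rewrite ?gt_eqF.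
by rewrite ler_wpM2l// !mulr_ge0// ?invr_ge0 ?ltW.
Qed.

Lemma EFin_div (R : realType) (x e : R) : e != 0 -> (x%:E / e%:E = (x / e)%:E)%E.
Proof. by move=> e0; rewrite inver (negbTE e0). Qed.

Section Main.
Context {d : measure_display} {T : measurableType d} {R : realType}
  (mu : {measure set T -> \bar R}) (f finv : T -> T).
Hypotheses (fK : cancel f finv) (finvK : cancel finv f).
Hypotheses (mf : measurable_fun setT f) (mfinv : measurable_fun setT finv).
Hypotheses (nullf : forall A, measurable A -> mu A = 0 -> mu (f @` A) = 0).
Hypotheses (nullfinv : forall A, measurable A -> mu A = 0 -> mu (finv @` A) = 0).
Local Notation F := (iterz f finv).

Lemma iterzS_fun z : F (z + 1) = f \o F z.
Proof. by apply/funext => x; rewrite (iterzS fK finvK). Qed.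
Lemma iterzP_fun z : F (z - 1) = finv \o F z.
Proof. by apply/funext => x; rewrite (iterzP fK finvK). Qed.
Lemma iterz0 : F 0 = id. Proof. by []. Qed.

Lemma mF j : measurable_fun setT (F j).
Proof.
elim/int_rect: j => [|n IH|n IH]; first exact: measurable_id.
- have -> : n.+1%:Z = n%:Z + 1 by lia.
  by rewrite iterzS_fun; exact: measurableT_comp.
- have -> : - n.+1%:Z = - n%:Z - 1 by lia.
  by rewrite iterzP_fun; exact: measurableT_comp.
Qed.

Lemma imgF j A : F j @` A = F (- j) @^-1` A.
Proof.
apply/seteqP; split => x.
- by move=> [a Aa <-]; rewrite /= (iterzN fK finvK).
- by move=> Ax; exists (F (- j) x) => //; rewrite (iterzNK fK finvK).
Qed.

Lemma mimgF j A : measurable A -> measurable (F j @` A).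
Proof. by move=> mA; rewrite imgF -[X in measurable X]setTI; exact: mF. Qed.

Lemma imgFK j A : F (- j) @` (F j @` A) = A.
Proof.
rewrite image_comp (_ : _ \o _ = id) ?image_id//.
by apply/funext => x /=; rewrite (iterzN fK finvK).
Qed.

Lemma imgFNK j A : F j @` (F (- j) @` A) = A.
Proof. by have := imgFK (- j) A; rewrite opprK. Qed.

Lemma nullF j A : measurable A -> mu A = 0 -> mu (F j @` A) = 0.
Proof.
elim/int_rect: j A => [|n IH|n IH] A mA A0; first by rewrite iterz0 image_id.
- have -> : n.+1%:Z = n%:Z + 1 by lia.
  rewrite iterzS_fun -image_comp; apply: nullf; first exact: mimgF.
  exact: IH.
- have -> : - n.+1%:Z = - n%:Z - 1 by lia.
  rewrite iterzP_fun -image_comp; apply: nullfinv; first exact: mimgF.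
  exact: IH.
Qed.

Variables (W : set T) (mW : measurable W) (W0 : (0 < mu W)%E) (Woo : (mu W < +oo)%E).
Hypothesis hsigma : sigma_finite setT mu.
Variables (K : R) (K0 : 0 < K).
Hypothesis hK : forall (k : int) (B : set T), measurable B -> B `<=` W -> (0 < mu B)%E ->
      ((K^-1)%:E * (mu (F k @` W) / mu W) <= mu (F k @` B) / mu B)%E /\ (mu (F k @` B) / mu B <= K%:E * (mu (F k @` W) / mu W))%E.

Lemma posF j : (0 < mu (F j @` W))%E.
Proof.
rewrite lt0e measure_ge0 andbT; apply/negP => /eqP h.
have := nullF (- j) _ (mimgF j W mW) h; rewrite imgFK => W00.
by move: W0; rewrite W00 ltxx.
Qed.

Lemma finF j : (mu (F j @` W) < +oo)%E.
Proof.
rewrite ltNge leye_eq; apply/negP => /eqP Hinf.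
case: hsigma => G GT hG.
have [i Hi] : exists i, (0 < mu (F j @` W `&` G i))%E.
  apply/not_existsP => H.
  have H0 i : mu (F j @` W `&` G i) = 0.
    apply/eqP; rewrite -measure_le0 leNgt; exact/negP/H.
  have : mu.-negligible (\bigcup_i (F j @` W `&` G i)).
    apply: negligible_bigcup => i; exists (F j @` W `&` G i); split => //.
    by apply: measurableI; [exact: mimgF|exact: (hG i).1].
  case=> N [mN N0 sN].
  have : (mu (F j @` W) <= mu N)%E.
    apply: le_measure; rewrite ?inE//; first exact: mimgF.
    move=> x Fx; apply: sN.
    have : setT x by [].
    rewrite GT => -[k _ Gk]; exists k => //.
  by rewrite N0 Hinf leNgt ltey.
pose B := F (- j) @` (F j @` W `&` G i).
have mB : measurable B.
  by apply: mimgF; apply: measurableI; [exact: mimgF|exact: (hG i).1].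
have BW : B `<=` W.
  move=> _ [y [[w Ww <-] _] <-]; by rewrite (iterzN fK finvK).
have FB : F j @` B = F j @` W `&` G i by rewrite /B imgFNK.
have B0 : (0 < mu B)%E.
  rewrite lt0e measure_ge0 andbT; apply/negP => /eqP h.
  by have := nullF j _ mB h; rewrite FB => h'; rewrite h' ltxx in Hi.
have [HK _] := hK j B mB BW B0; move: HK.
rewrite Hinf FB.
have Bfin : mu B \is a fin_num.
  rewrite ge0_fin_numE ?measure_ge0//; apply: le_lt_trans Woo.
  by apply: le_measure; rewrite ?inE.
have mG : measurable (F j @` W `&` G i).
  by apply: measurableI; [exact: mimgF|exact: (hG i).1].
have Gfin : mu (F j @` W `&` G i) \is a fin_num.
  rewrite ge0_fin_numE ?measure_ge0//; apply: le_lt_trans (hG i).2.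
  by apply: le_measure; [rewrite inE|rewrite inE; exact: (hG i).1|exact: subIsetr].
have Wfin : mu W \is a fin_num by rewrite ge0_fin_numE ?measure_ge0.
rewrite -(fineK Bfin) -(fineK Gfin) -(fineK Wfin) !inver.
have b0 : 0 < fine (mu B).
  by rewrite fine_gt0// B0 ltey_eq Bfin.
have w0 : 0 < fine (mu W) by rewrite fine_gt0// W0 Woo.
rewrite (gt_eqF b0) (gt_eqF w0).
rewrite mulyr gtr0_sg ?invr_gt0// mul1e mulry gtr0_sg ?invr_gt0// mul1e.
by rewrite leye_eq -EFinM.
Qed.


Lemma finB B : measurable B -> B `<=` W -> mu B \is a fin_num.
Proof.
move=> mB BW; rewrite ge0_fin_numE ?measure_ge0//; apply: le_lt_trans Woo.
by apply: le_measure; rewrite ?inE.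
Qed.

Lemma finFB j B : measurable B -> B `<=` W -> mu (F j @` B) \is a fin_num.
Proof.
move=> mB BW; rewrite ge0_fin_numE ?measure_ge0//; apply: le_lt_trans (finF j).
apply: le_measure; rewrite ?inE; [exact: mimgF|exact: mimgF|exact: image_subset].
Qed.

Lemma cmp k n A : measurable A -> A `<=` F (k + n) @` W ->
  (mu (F (- n) @` A) <= (K ^+ 2 * fine (mu (F k @` W)) / fine (mu (F (k + n) @` W)))%:E * mu A)%E.
Proof.
move=> mA AW.
pose B0 := F (- (k + n)) @` A.
have mB0 : measurable B0 by exact: mimgF.
have B0W : B0 `<=` W.
  move=> _ [y /AW [w Ww <-] <-]; by rewrite (iterzN fK finvK).
have FkB0 : F k @` B0 = F (- n) @` A.
  rewrite /B0 image_comp; congr image; apply/funext => x /=.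
  by rewrite -(iterzD fK finvK); congr F; lia.
have FknB0 : F (k + n) @` B0 = A by rewrite /B0 imgFNK.
have [B00|B0pos] : mu B0 = 0 \/ (0 < mu B0)%E.
  by have := measure_ge0 mu B0; rewrite le_eqVlt => /orP[/eqP <-|]; [left|right].
  rewrite -FkB0 nullF//; apply: mule_ge0 => //; rewrite lee_fin.
  by rewrite !mulr_ge0// ?invr_ge0 ?fine_ge0// ?measure_ge0// ltW.
have [_ h1] := hK k B0 mB0 B0W B0pos.
have [h2 _] := hK (k + n) B0 mB0 B0W B0pos.
rewrite FkB0 in h1; rewrite FknB0 in h2.
have fa := finFB k W mW (@subset_refl _ W).
have fb := finFB (k + n) W mW (@subset_refl _ W).
have fx : mu (F (- n) @` A) \is a fin_num by rewrite -FkB0; exact: finFB.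
have fy : mu A \is a fin_num by rewrite -FknB0; exact: finFB.
have fm := finB B0 mB0 B0W.
have fw : mu W \is a fin_num by rewrite ge0_fin_numE ?measure_ge0.
have m0 : 0 < fine (mu B0) by rewrite fine_gt0// B0pos ltey_eq fm.
have w0 : 0 < fine (mu W) by rewrite fine_gt0// W0 Woo.
have a0 : 0 < fine (mu (F k @` W)) by rewrite fine_gt0// posF ltey_eq fa.
have b0 : 0 < fine (mu (F (k + n) @` W)) by rewrite fine_gt0// posF ltey_eq fb.
move: h1 h2; rewrite -(fineK fa) -(fineK fb) -(fineK fx) -(fineK fy) -(fineK fm) -(fineK fw).
rewrite !EFin_div ?gt_eqF// -!EFinM !lee_fin => h1 h2.
rewrite !fineK//=.
exact: real_ratio h1 h2.
Qed.

End Main.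

Theorem lemma4p1 (d : measure_display) (T : measurableType d) (R : realType)
  (mu : {measure set T -> \bar R}) (f finv : T -> T) (W : set T) (p : R)
  (hp : 1 <= p)
  (hsigma : sigma_finite setT mu)
  (hf : bimeas_invertible f finv)
  (hRNf : RN_bounded_below mu f)
  (hRNfinv : RN_bounded_below mu finv)
  (hW : dissipative_gen mu f finv W)
  (hbd : bounded_distortion mu f finv W) :
  exists L : R, 0 < L /\
    forall (n k : int) (phi : T -> R), in_Lp mu p phi ->
      let Ik := iterz f finv k @` W in
      let Ikn := iterz f finv (k + n) @` W in
      ((L^-1)%:E * (mu Ik / mu Ikn) * \int[mu]_(x in Ikn) (`|phi x| `^ p)%:E
         <= \int[mu]_(x in Ik) (`|phi (iterz f finv n x)| `^ p)%:E)%E /\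
      (\int[mu]_(x in Ik) (`|phi (iterz f finv n x)| `^ p)%:E
         <= L%:E * (mu Ik / mu Ikn) * \int[mu]_(x in Ikn) (`|phi x| `^ p)%:E)%E.
Proof.
case: hf => fK finvK mf mfinv.
have nullf := @RN_null _ _ _ _ _ hRNf; have nullfinv := @RN_null _ _ _ _ _ hRNfinv.
case: hW => mW W0 Woo _ _.
case: hbd => K [K0 hK].
exists (K ^+ 2); split; first exact: exprn_gt0.
move=> n k phi [mphi _] Ik Ikn.
have cmp' := @cmp _ _ _ mu f finv fK finvK mf mfinv nullf nullfinv W mW W0 Woo hsigma K K0 hK.
have posF' := @posF _ _ _ mu f finv fK finvK mf mfinv nullf nullfinv W mW W0.
have finF' := @finF _ _ _ mu f finv fK finvK mf mfinv nullf nullfinv W mW W0 Woo hsigma K K0 hK.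
have mimg := mimgF f finv fK finvK mf mfinv.
have mFn := mF f finv fK finvK mf mfinv n.
pose g := fun x => (`|phi x| `^ p)%:E.
have g0 x : (0 <= g x)%E by rewrite lee_fin powR_ge0.
have mg : measurable_fun setT g.
  apply/measurable_EFinP; apply: (measurableT_comp (measurable_powR p)).
  exact: measurableT_comp.
have mIk : measurable Ik by exact: mimg.
have mIkn : measurable Ikn by exact: mimg.
have preI : iterz f finv n @^-1` Ikn = Ik.
  have := imgF f finv fK finvK (- n) Ikn; rewrite opprK => <-.
  rewrite /Ikn /Ik image_comp.
  congr image; apply/funext => x /=.
  by rewrite -(iterzD fK finvK); congr iterz; lia.
have push : (\int[mu]_(x in Ik) (`|phi (iterz f finv n x)| `^ p)%:E =
    \int[pushforward mu (iterz f finv n)]_(y in Ikn) g y)%E.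
  rewrite ge0_integral_pushforward//; first by rewrite preI.
  exact: measurable_funS mg.
have fa : mu Ik \is a fin_num by rewrite ge0_fin_numE ?measure_ge0 ?finF'.
have fb : mu Ikn \is a fin_num by rewrite ge0_fin_numE ?measure_ge0 ?finF'.
have a0 : 0 < fine (mu Ik) by rewrite fine_gt0// posF' finF'.
have b0 : 0 < fine (mu Ikn) by rewrite fine_gt0// posF' finF'.
set a := fine (mu Ik) in a0 *; set b := fine (mu Ikn) in b0 *.
have ratio : (mu Ik / mu Ikn = (a / b)%:E)%E.
  by rewrite -(fineK fa) -(fineK fb) EFin_div ?gt_eqF.
have e A : iterz f finv n @^-1` A = iterz f finv (- n) @` A.
  by have := imgF f finv fK finvK (- n) A; rewrite opprK.
have up : (\int[pushforward mu (iterz f finv n)]_(y in Ikn) g y <=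
    (K ^+ 2 * a / b)%:E * \int[mu]_(y in Ikn) g y)%E.
  apply: (@integral_cmp _ _ _ _ _ _ mIkn (K ^+ 2 * a / b)) => //.
    by rewrite !mulr_ge0// ?invr_ge0 ?ltW.
  move=> A mA AIkn; change (mu (iterz f finv n @^-1` A) <= (K ^+ 2 * a / b)%:E * mu A)%E; rewrite e.
  exact: cmp' k n A mA AIkn.
have lo : (\int[mu]_(y in Ikn) g y <=
    (K ^+ 2 * b / a)%:E * \int[pushforward mu (iterz f finv n)]_(y in Ikn) g y)%E.
  apply: (@integral_cmp _ _ _ _ _ _ mIkn (K ^+ 2 * b / a)) => //.
    by rewrite !mulr_ge0// ?invr_ge0 ?ltW.
  move=> A mA AIkn; change (mu A <= (K ^+ 2 * b / a)%:E * mu (iterz f finv n @^-1` A))%E; rewrite e.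
  have A' : iterz f finv (- n) @` A `<=` iterz f finv (k + n + - n) @` W.
    rewrite addrK; change (iterz f finv (- n) @` A `<=` Ik); rewrite -preI e; exact: image_subset.
  have := cmp' (k + n) (- n) _ (mimg _ _ mA) A'.
  by rewrite opprK (imgFNK f finv fK finvK) addrK.
rewrite push ratio; split.
- rewrite -EFinM; apply: (le_trans (lee_wpmul2l _ lo)).
    by rewrite lee_fin mulr_ge0// ?invr_ge0 ?exprn_ge0 ?divr_ge0// ltW.
  rewrite muleA -EFinM.
  have -> : (K ^+ 2)^-1 * (a / b) * (K ^+ 2 * b / a) = 1.
    by field; rewrite ?gt_eqF// expf_neq0// gt_eqF.
  by rewrite mul1e.
- apply: (le_trans up).
  by rewrite -EFinM mulrA.
Qed.
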